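(* Let $n\ge 2$ and $c\ge1$ be integers, and let $e_{n,c}$ be the order of $b^{-n}a^{-n}(ab)^{n}$ in $M(R(2,n;c))$. If $G$ is any finite group of exponent $n$ that is nilpotent of class at most $c$, then the exponent of $M(G)$ divides $n\,e_{n,c}$.
   Context: $R(2,n)$ denotes the largest finite $2$-generator group of exponent $n$, and $R(2,n;c)$ denotes its largest quotient of nilpotency class at most $c$ (equivalently the largest $2$-generator group of exponent $n$ and class at most $c$). Write $R(2,n;c)=F/R$ with $F$ free on $a,b$. The Schur multiplier is given by Hopf's formula $M(G)=(R\cap F')/[F,R]$ for $G=F/R$, $F$ free; $b^{-n}a^{-n}(ab)^n[F,R]$ lies in $M(R(2,n;c))$. *)

(* Defs.v *)
(* Free groups are not in MathComp, so we model the free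
   group on a type X by words over X, with equality in the free group given
   by equality of free reductions. *)
From HB Require Import structures.
From mathcomp Require Import all_boot all_order all_fingroup all_solvable.
Set Implicit Arguments. Unset Strict Implicit. Unset Printing Implicit Defensive.

Section FreeGroup.
Variable X : eqType.

(* a letter (false, x) stands for x, (true, x) for x^-1 *)
Definition letter := (bool * X)%type.
Definition word := seq letter.

Definition wpush (a : letter) (w : word) : word :=
  match w with
  | b :: w' => if (b.1 != a.1) && (b.2 == a.2) then w' else a :: w
  | [::] => [:: a]
  end.

(* free reduction; u and v represent the same element of the free group
   iff fred u = fred v *)
Definition fred (w : word) : word := foldr wpush [::] w.

(* group operations on words: product is concatenation *)
Definition winv (w : word) : word := rev (map (fun a => (~~ a.1, a.2)) w).
Definition wexp (w : word) (m : nat) : word := flatten (nseq m w).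
Definition wcomm (u v : word) : word := winv u ++ winv v ++ u ++ v.

Inductive gen (S : word -> Prop) : word -> Prop :=
| gen_base w : S w -> gen S w
| gen_one : gen S [::]
| gen_inv w : gen S w -> gen S (winv w)
| gen_mul u v : gen S u -> gen S v -> gen S (u ++ v)
| gen_eq u v : fred u = fred v -> gen S u -> gen S v.

Definition commsub (A B : word -> Prop) : word -> Prop :=
  gen (fun w => exists u v, A u /\ B v /\ w = wcomm u v).

(* lower central series: lcs k = gamma_{k+1}(F) ; lcs 0 = F *)
Fixpoint lcs (k : nat) : word -> Prop :=
  match k with
  | 0 => fun _ => True
  | k'.+1 => commsub (lcs k') (fun _ => True)
  end.

Definition Fder : word -> Prop := commsub (fun _ => True) (fun _ => True).

Definition powsub (n : nat) : word -> Prop :=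
  gen (fun w => exists u, w = wexp u n).

(* M = (R cap F')/[F,R]; the element x (of R cap F') has order dividing m
   in M iff x^m lies in [F,R]; M has exponent dividing m iff this holds for
   every x in R cap F'. *)
Definition mult_exp_dvd (R : word -> Prop) (m : nat) : Prop :=
  forall x, R x -> Fder x -> commsub (fun _ => True) R (wexp x m).

Definition mult_order (R : word -> Prop) (x : word) (e : nat) : Prop :=
  0 < e /\ commsub (fun _ => True) R (wexp x e) /\
  forall k, 0 < k < e -> ~ commsub (fun _ => True) R (wexp x k).

End FreeGroup.

Definition gen_a : word bool := [:: (false, false)].
Definition gen_b : word bool := [:: (false, true)].

(* R = F^n gamma_{c+1}(F): the kernel of F_2 -> R(2,n;c) *)
Definition Rrel (n c : nat) : word bool -> Prop :=
  gen (fun w => powsub n w \/ lcs c w).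

Definition wspecial (n : nat) : word bool :=
  wexp (winv gen_b) n ++ wexp (winv gen_a) n ++ wexp (gen_a ++ gen_b) n.

Definition is_e (n c e : nat) : Prop := mult_order (Rrel n c) (wspecial n) e.

(* ---- presentation of a finite group G = F/R, F free on the elements of G ---- *)
Definition weval (gT : finGroupType) (w : word gT) : gT :=
  foldr (fun a g => ((if a.1 then a.2^-1 else a.2) * g)%g) 1%g w.

Definition Rker (gT : finGroupType) : word gT -> Prop :=
  fun w => weval w = 1%g.

Definition schur_exp_dvd (gT : finGroupType) (m : nat) : Prop :=
  mult_exp_dvd (@Rker gT) m.

(* Main.v *)
Require Import Defs.
From mathcomp Require Import all_boot all_order all_fingroup all_solvable.
Set Implicit Arguments. Unset Strict Implicit. Unset Printing Implicit Defensive.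

Section Words.
Variable X : eqType.
Implicit Types (u v w r : word X) (a : letter X).

Definition linv a : letter X := (~~ a.1, a.2).

Lemma linvK a : linv (linv a) = a.
Proof. by case: a => [s x]; rewrite /linv /= negbK. Qed.

Lemma winv_cat u v : winv (u ++ v) = winv v ++ winv u.
Proof. by rewrite /winv map_cat rev_cat. Qed.

Lemma winv_cons a u : winv (a :: u) = winv u ++ [:: linv a].
Proof. by rewrite /winv /= rev_cons cats1. Qed.

Lemma winvK u : winv (winv u) = u.
Proof.
elim: u => // a u IH. by rewrite winv_cons winv_cat IH /= /linv /= negbK; case: a.
Qed.

Lemma wexpS u m : wexp u m.+1 = u ++ wexp u m.
Proof. by []. Qed.

Lemma wexpD u m1 m2 : wexp u (m1 + m2) = wexp u m1 ++ wexp u m2.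
Proof. by elim: m1 => // m1 IH; rewrite addSn !wexpS IH catA. Qed.

Lemma wexpSr u m : wexp u m.+1 = wexp u m ++ u.
Proof. by rewrite -addn1 wexpD /wexp /= cats0. Qed.

Lemma wexpM u m1 m2 : wexp u (m1 * m2) = wexp (wexp u m1) m2.
Proof. elim: m2 => [|m2 IH]; first by rewrite muln0. by rewrite mulnS wexpD IH. Qed.

Lemma winv_exp u m : winv (wexp u m) = wexp (winv u) m.
Proof. elim: m => // m IH. by rewrite wexpS winv_cat IH wexpSr. Qed.

Fixpoint red w : bool :=
  if w is a :: w' then
    (if w' is b :: _ then ~~ ((b.1 != a.1) && (b.2 == a.2)) else true) && red w'
  else true.

Lemma red_wpush a w : red w -> red (wpush a w).
Proof.
case: w => [|b w] //= /andP [H1 H2].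
case: ifP => [_ //| H]; by rewrite /= H H1.
Qed.

Lemma red_fred w : red (fred w).
Proof. elim: w => //= a w IH. exact: red_wpush. Qed.

Lemma red_foldr w u : red w -> red (foldr (@wpush X) w u).
Proof. move=> H; elim: u => //= a u IH. exact: red_wpush. Qed.

Lemma wpushK a r : red r -> wpush a (wpush (linv a) r) = r.
Proof.
case: a => [s x]; case: r => [|[t y] r] /=.
  by rewrite eqxx; case: s.
case: (y =P x) => [->|neq].
  case: s; case: t => /andP [H1 _]; rewrite /= ?eqxx //;
  case: r H1 => [|[t' y'] r] //= H1; by rewrite (negbTE H1).
move=> _; rewrite andbF /= eqxx.
by case: s.
Qed.

Lemma wpushK' a r : red r -> wpush (linv a) (wpush a r) = r.
Proof. by move=> H; rewrite -{2}(linvK a) wpushK. Qed.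

Lemma fold_wpush w v a : red w ->
  foldr (@wpush X) w (wpush a v) = wpush a (foldr (@wpush X) w v).
Proof.
move=> Hw; case: v => [|b v] //=.
case: ifP => // /andP [H1 /eqP H2].
have -> : b = linv a.
  by case: a b H1 H2 => [s x] [t y] /= H1 ->; case: s t H1 => [] [].
by rewrite wpushK ?red_foldr.
Qed.

Lemma fold_fred w u : red w -> foldr (@wpush X) w u = foldr (@wpush X) w (fred u).
Proof. move=> Hw; elim: u => //= a u IH. by rewrite IH fold_wpush. Qed.

Lemma fred_cat' u v : fred (u ++ v) = foldr (@wpush X) (fred v) u.
Proof. by rewrite /fred foldr_cat. Qed.

Lemma fred_cat u v : fred (u ++ v) = foldr (@wpush X) (fred v) (fred u).
Proof. by rewrite fred_cat' -fold_fred // red_fred. Qed.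

Lemma eqw_cat u u' v v' : fred u = fred u' -> fred v = fred v' ->
  fred (u ++ v) = fred (u' ++ v').
Proof. by rewrite !(fred_cat _ v) (fred_cat _ v') => -> ->. Qed.

Lemma fred_invl u : fred (winv u ++ u) = [::].
Proof.
elim: u => // a u IH.
rewrite winv_cons -catA fred_cat' /=.
by rewrite wpushK' ?red_fred // -fred_cat'.
Qed.

Lemma fred_invr u : fred (u ++ winv u) = [::].
Proof. by have := fred_invl (winv u); rewrite winvK. Qed.

Lemma canc1 u w v : fred (u ++ winv w ++ w ++ v) = fred (u ++ v).
Proof.
rewrite (fred_cat' u) (fred_cat' u v); congr foldr.
by rewrite catA fred_cat fred_invl.
Qed.

Lemma canc2 u w v : fred (u ++ w ++ winv w ++ v) = fred (u ++ v).
Proof.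
rewrite (fred_cat' u) (fred_cat' u v); congr foldr.
by rewrite catA fred_cat fred_invr.
Qed.

End Words.

Section Sigma.
Variables (Y X : eqType) (f : Y -> word X).

Definition sig1 (a : letter Y) : word X := if a.1 then winv (f a.2) else f a.2.
Fixpoint sig (w : word Y) : word X :=
  if w is a :: w' then sig1 a ++ sig w' else [::].

Lemma sig_cat u v : sig (u ++ v) = sig u ++ sig v.
Proof. by elim: u => //= a u ->; rewrite catA. Qed.

Lemma sig1_linv a : sig1 (linv a) = winv (sig1 a).
Proof. by case: a => [[] y]; rewrite /sig1 /= ?winvK. Qed.

Lemma sig_inv u : sig (winv u) = winv (sig u).
Proof.
elim: u => // a u IH.
by rewrite winv_cons sig_cat IH /= cats0 sig1_linv winv_cat.
Qed.

Lemma sig_exp u m : sig (wexp u m) = wexp (sig u) m.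
Proof. elim: m => // m IH. by rewrite !wexpS sig_cat IH. Qed.

Lemma sig_fred u : fred (sig u) = fred (sig (fred u)).
Proof.
elim: u => // a u IH.
rewrite /= fred_cat IH -fred_cat.
case: (fred u) => [|b w] //=.
case: ifP => // /andP [H1 /eqP H2].
have -> : b = linv a.
  by case: a b H1 H2 => [s x] [t y] /= H1 ->; case: s t H1 => [] [].
by rewrite sig1_linv (canc2 [::]).
Qed.

Lemma sig_eqw u v : fred u = fred v -> fred (sig u) = fred (sig v).
Proof. by move=> H; rewrite sig_fred H -sig_fred. Qed.

End Sigma.

Section Grp.
Variable gT : finGroupType.
Implicit Types (u v w x y z r s g : word gT).
Local Open Scope group_scope.

Lemma weval_cat u v : weval (u ++ v) = weval u * weval v.
Proof. by elim: u => [|a u IH] /=; rewrite ?mul1g // IH mulgA. Qed.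

Lemma weval_inv u : weval (winv u) = (weval u)^-1.
Proof.
elim: u => [|a u IH]; first by rewrite /= invg1.
rewrite winv_cons weval_cat IH /= mulg1 invMg.
by case: a => [[] y] /=; rewrite ?invgK.
Qed.

Lemma weval_exp u m : weval (wexp u m) = weval u ^+ m.
Proof. elim: m => [|m IH]; first by []. by rewrite wexpS weval_cat IH expgS. Qed.

Lemma weval_fred u : weval (fred u) = weval u.
Proof.
elim: u => // a u /= <-.
case: (fred u) => [|b w] //=.
case: ifP => // /andP [H1 /eqP H2] /=.
case: a b H1 H2 => [s x] [t y] /= H1 ->; case: s t H1 => [] [] //= _;
by rewrite mulgA ?mulgV ?mulVg mul1g.
Qed.

Definition R0 := @Rker gT.
Definition N := commsub (fun _ : word gT => True) R0.

Lemma R0_eqw u v : fred u = fred v -> R0 u -> R0 v.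
Proof. by rewrite /R0 /Rker -weval_fred => -> ; rewrite weval_fred. Qed.

Lemma R0_cat u v : R0 u -> R0 v -> R0 (u ++ v).
Proof. by rewrite /R0 /Rker weval_cat => -> ->; rewrite mul1g. Qed.

Lemma R0_inv u : R0 u -> R0 (winv u).
Proof. by rewrite /R0 /Rker weval_inv => ->; rewrite invg1. Qed.

Lemma R0_nil : R0 [::].
Proof. by []. Qed.

Lemma N_conj g s : N s -> N (winv g ++ s ++ g).
Proof.
elim=> {s}.
- move=> w [u [v [_ [Rv ->]]]].
  apply: (gen_eq (u := wcomm (u ++ g) v ++ winv (wcomm g v))); last first.
    apply: gen_mul; first by apply: gen_base; exists (u ++ g), v.
    by apply: gen_inv; apply: gen_base; exists g, v.
  rewrite /wcomm !winv_cat !winvK -!catA.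
  rewrite (_ : _ ++ _ = (winv g ++ winv u ++ winv v ++ u ++ g) ++ v ++ winv v ++ (winv g ++ v ++ g));
    last by rewrite -!catA.
  rewrite canc2 (_ : _ ++ _ = (winv g ++ winv u ++ winv v ++ u) ++ g ++ winv g ++ (v ++ g));
    last by rewrite -!catA.
  by rewrite canc2 -!catA.
- apply: (gen_eq (u := [::])); first by rewrite /= fred_invl.
  exact: gen_one.
- move=> w _ IH. have := gen_inv IH. by rewrite !winv_cat winvK catA.
- move=> u v _ IHu _ IHv.
  apply: (gen_eq (u := (winv g ++ u ++ g) ++ (winv g ++ v ++ g))); last first.
    exact: gen_mul.
  rewrite (_ : _ ++ _ = (winv g ++ u) ++ g ++ winv g ++ (v ++ g)); last by rewrite -!catA.
  by rewrite canc2 -!catA.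
- move=> u v H _ IH. apply: gen_eq IH.
  by apply: eqw_cat => //; apply: eqw_cat.
Qed.

End Grp.

Section Eq.
Variable gT : finGroupType.
Implicit Types (u v w x y z r s g a : word gT).
Local Open Scope group_scope.

Definition E x y := N (winv x ++ y).

Lemma E_eqw x y : fred x = fred y -> E x y.
Proof.
move=> H; apply: (gen_eq (u := [::])); last exact: gen_one.
transitivity (fred (winv x ++ x)); first by rewrite fred_invl.
exact: eqw_cat.
Qed.

Lemma E_refl x : E x x.
Proof. exact: E_eqw. Qed.

Lemma E_sym x y : E x y -> E y x.
Proof. by move/gen_inv; rewrite /E winv_cat winvK. Qed.

Lemma E_trans x y z : E x y -> E y z -> E x z.
Proof.
move=> H1 H2; have := gen_mul H1 H2; apply: gen_eq.
by rewrite -catA canc2.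
Qed.

Lemma E_catl z x y : E x y -> E (z ++ x) (z ++ y).
Proof. by apply: gen_eq; rewrite winv_cat -catA canc1. Qed.

Lemma E_catr z x y : E x y -> E (x ++ z) (y ++ z).
Proof. by move/(N_conj z); rewrite /E winv_cat -!catA. Qed.

Lemma E_cat x x' y y' : E x x' -> E y y' -> E (x ++ y) (x' ++ y').
Proof. move=> H1 H2; apply: E_trans (E_catr _ H1) (E_catl _ H2). Qed.

Lemma E_comm r u : R0 r -> E (u ++ r) (r ++ u).
Proof.
move=> Hr; apply: E_sym; rewrite /E winv_cat -!catA.
by apply: gen_base; exists u, r.
Qed.

Lemma E_nil a : N a -> E [::] a.
Proof. by []. Qed.

Lemma eqw_exp x y m : fred x = fred y -> fred (wexp x m) = fred (wexp y m).
Proof. move=> H; elim: m => // m IH. by rewrite !wexpS; apply: eqw_cat. Qed.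

Lemma R0_exp r m : R0 r -> R0 (wexp r m).
Proof. by rewrite /R0 /Rker weval_exp => ->; rewrite expg1n. Qed.

Lemma E_hom2 r s m : R0 r -> R0 s -> E (wexp (r ++ s) m) (wexp r m ++ wexp s m).
Proof.
move=> Hr Hs; elim: m => [|m IH]; first exact: E_refl.
rewrite !wexpS -catA; apply: E_trans (E_catl _ (E_catl _ IH)) _.
rewrite -catA; apply: E_catl; rewrite !catA; apply: E_catr.
exact: E_comm (R0_exp m Hr).
Qed.

End Eq.

Section Main.
Variables (gT : finGroupType) (n c e : nat).
Local Open Scope group_scope.
Hypothesis expn : forall z : gT, z ^+ n = 1.
Hypothesis Lc : 'L_c.+1([set: gT]) = 1.
Hypothesis He : is_e n c e.

Lemma R0_expn (z : word gT) : R0 (wexp z n).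
Proof. by rewrite /R0 /Rker weval_exp expn. Qed.

Section F.
Variable f : bool -> word gT.

Lemma lcs_eval k w : lcs k w -> weval (sig f w) \in 'L_k.+1([set: gT]).
Proof.
elim: k w => [|k IHk] w /=; first by rewrite lcn1 inE.
elim=> {w}.
- move=> w [u [v [Hu [_ ->]]]].
  rewrite /wcomm !sig_cat !sig_inv !weval_cat !weval_inv lcnSn.
  have -> : (weval (sig f u))^-1 * ((weval (sig f v))^-1 * (weval (sig f u) * weval (sig f v)))
    = [~ weval (sig f u), weval (sig f v)] by rewrite /commg /conjg !mulgA.
  by apply: mem_commg; [apply: IHk | rewrite inE].
- exact: group1.
- by move=> w _ IH; rewrite sig_inv weval_inv groupV.
- by move=> u v _ IHu _ IHv; rewrite sig_cat weval_cat groupM.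
- by move=> u v H _ IH; rewrite -weval_fred -(sig_eqw f H) weval_fred.
Qed.

Lemma Rrel_R0 w : Rrel n c w -> R0 (sig f w).
Proof.
elim=> {w}.
- move=> w [|Hl].
    elim=> {w}.
    + by move=> w [u ->]; rewrite sig_exp; apply: R0_expn.
    + by [].
    + by move=> w _ IH; rewrite sig_inv; apply: R0_inv.
    + by move=> u v _ IHu _ IHv; rewrite sig_cat; apply: R0_cat.
    + by move=> u v H _ IH; apply: R0_eqw IH; apply: sig_eqw.
  have := lcs_eval Hl; rewrite Lc inE => /eqP.
  by [].
- by [].
- by move=> w _ IH; rewrite sig_inv; apply: R0_inv.
- by move=> u v _ IHu _ IHv; rewrite sig_cat; apply: R0_cat.
- by move=> u v H _ IH; apply: R0_eqw IH; apply: sig_eqw.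
Qed.

Lemma comm_N w : commsub (fun _ => True) (Rrel n c) w -> N (sig f w).
Proof.
elim=> {w}.
- move=> w [u [v [_ [Hv ->]]]].
  rewrite /wcomm !sig_cat !sig_inv.
  by apply: gen_base; exists (sig f u), (sig f v); split=> //; split => //; apply: Rrel_R0.
- exact: gen_one.
- by move=> w _ IH; rewrite sig_inv; apply: gen_inv.
- by move=> u v _ IHu _ IHv; rewrite sig_cat; apply: gen_mul.
- by move=> u v H _ IH; apply: gen_eq IH; apply: sig_eqw.
Qed.

End F.

Lemma hom (x y : word gT) :
  E (wexp (x ++ y) (n * e)) (wexp x (n * e) ++ wexp y (n * e)).
Proof.
pose X := wexp x n; pose Y := wexp y n; pose Z := wexp (x ++ y) n.
pose W := winv Y ++ winv X ++ Z.
have NW : N (wexp W e).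
  have := comm_N (fun b => if b then y else x) (proj1 (proj2 He)).
  rewrite sig_exp /wspecial !sig_cat !sig_exp !sig_inv /= !cats0 -!winv_exp.
  by [].
have Eq1 : fred Z = fred ((X ++ Y) ++ W).
  by rewrite /W -catA canc2 (canc2 [::]).
have R0X : R0 X by apply: R0_expn.
have R0Y : R0 Y by apply: R0_expn.
have R0W : R0 W by apply: R0_cat; [apply: R0_inv | apply: R0_cat; [apply: R0_inv|apply: R0_expn]].
rewrite !wexpM.
apply: E_trans (E_eqw (eqw_exp e Eq1)) _.
apply: E_trans (E_hom2 e (R0_cat R0X R0Y) R0W) _.
rewrite -[X in E _ X]cats0.
apply: E_cat; first exact: E_hom2.
exact: E_sym.
Qed.

Lemma wexp_nil m : wexp ([::] : word gT) m = [::].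
Proof. by elim: m. Qed.

Lemma main (x : word gT) : Fder x -> N (wexp x (n * e)).
Proof.
elim=> {x}.
- move=> w [u [v [_ [_ ->]]]].
  have H1 : E (wexp (wcomm u v) (n * e))
    (wexp (winv u) (n * e) ++ wexp (winv v) (n * e) ++ wexp u (n * e) ++ wexp v (n * e)).
    rewrite /wcomm.
    apply: E_trans (hom _ _) _; apply: E_catl.
    apply: E_trans (hom _ _) _; apply: E_catl.
    exact: hom.
  have H2 : N (wexp (winv u) (n * e) ++ wexp (winv v) (n * e) ++ wexp u (n * e) ++ wexp v (n * e)).
    rewrite -!winv_exp; apply: gen_base; do 2 eexists; split=> //; split; last by [].
    by rewrite wexpM; apply: R0_exp; apply: R0_expn.
  change (E [::] (wexp (wcomm u v) (n * e))).
  exact: (E_trans (E_nil H2) (E_sym H1)).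
- rewrite wexp_nil; exact: gen_one.
- by move=> w _ IH; rewrite -winv_exp; apply: gen_inv.
- move=> u v _ IHu _ IHv.
  change (E [::] (wexp (u ++ v) (n * e))).
  exact: (E_trans (E_cat (E_nil IHu) (E_nil IHv)) (E_sym (hom u v))).
- by move=> u v H _ IH; apply: gen_eq IH; apply: eqw_exp.
Qed.

End Main.

Theorem theorem2 (n c : nat) (e : nat) :
  2 <= n -> 1 <= c -> is_e n c e ->
  forall gT : finGroupType,
    exponent [set: gT] %| n ->
    nilpotent [set: gT] -> nil_class [set: gT] <= c ->
    schur_exp_dvd gT (n * e).
Proof.
move=> _ _ He gT Hexp Hnil Hcl x _ Fx.
have expn : forall z : gT, (z ^+ n)%g = 1%g.
  by move=> z; apply: (exponentP Hexp); rewrite inE.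
have Lc : 'L_c.+1([set: gT])%g = 1%g by apply/(lcn_nil_classP c Hnil).
exact: (main expn Lc He Fx).
Qed.
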